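(* Let $m,t\in\mathbb N$ and $\theta\in\{0,1\}^m$. Let $\rho_{XYR}$ be a density matrix on registers $X,Y$ ($m$ qubits each) and $R$ such that $(\Pi_t^{\mathsf{EPR}}\otimes\mathds 1_R)\rho_{XYR}=\rho_{XYR}$. Let $\{\Pi_{v'}\}_{v'\in\{0,1\}^m}$ be any complete set of orthogonal projectors on $R$. Then $$\sum_{v\in\{0,1\}^m}\mathrm{Tr}\big[(H^\theta|v\rangle\langle v|_XH^\theta\otimes\mathds 1_Y\otimes\Pi_v)\rho_{XYR}\big]\le2^{-m}(m+1)^{2t},$$ i.e. when $X$ is measured in the $H^\theta$ basis (outcome $v$) and $R$ with $\{\Pi_{v'}\}$ (outcome $v'$), $\Pr[v'=v]\le2^{-m}(m+1)^{2t}$; equivalently $\mathbf H_{\min}(V\mid R)\ge m-2t\log_2(m+1)$.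
   Context: $H^\theta=H^{\theta_1}\otimes\cdots\otimes H^{\theta_m}$ with $H$ the Hadamard gate. For $a,b\in\{0,1\}^m$, $|\phi^+_{ab}\rangle=2^{-m/2}\sum_{v\in\{0,1\}^m}|v\rangle_X\otimes X^aZ^b|v\rangle_Y$ (Pauli $X^a=\bigotimes_iX^{a_i}$, $Z^b=\bigotimes_iZ^{b_i}$). $\Pi_t^{\mathsf{EPR}}=\sum_{a,b:\,w(a),w(b)\le t}|\phi^+_{ab}\rangle\langle\phi^+_{ab}|$, where $w(\cdot)$ is Hamming weight. *)

(* Defs.v *)
From mathcomp Require Import all_boot all_order all_algebra.
Set Implicit Arguments. Unset Strict Implicit. Unset Printing Implicit Defensive.
Import Order.TTheory GRing.Theory Num.Theory.
Local Open Scope ring_scope.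

Section Quantum.
Variable C : numClosedFieldType.

(* Linear operators on the Hilbert space C^I, I a finite index type,
   represented by their matrix entries in the computational basis. *)
Definition op (I : finType) := I -> I -> C.

Definition opmul (I : finType) (A B : op I) : op I :=
  fun i j => \sum_(k : I) A i k * B k j.
Definition optr (I : finType) (A : op I) : C := \sum_(i : I) A i i.
Definition idop (I : finType) : op I := fun i j => (i == j)%:R.
Definition kron (I J : finType) (A : op I) (B : op J) : op (I * J)%type :=
  fun ij kl => A ij.1 kl.1 * B ij.2 kl.2.
Definition adj (I : finType) (A : op I) : op I := fun i j => (A j i)^*.

Definition ketbra (I : finType) (u : I -> C) : op I := fun i j => u i * (u j)^*.
Definition basisproj (I : finType) (v : I) : op I :=
  fun i j => ((i == v) && (j == v))%:R.

Definition hermitian (I : finType) (A : op I) := forall i j, A i j = (A j i)^*.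
Definition psd (I : finType) (A : op I) :=
  hermitian A /\ forall u : I -> C, 0 <= \sum_(i : I) \sum_(j : I) (u i)^* * A i j * u j.
Definition density (I : finType) (rho : op I) := psd rho /\ optr rho = 1.
Definition projector (I : finType) (P : op I) := hermitian P /\ opmul P P = P.

Definition complete_orth_projectors (K I : finType) (P : K -> op I) :=
  [/\ forall k, projector (P k),
      forall k l, k != l -> opmul (P k) (P l) = (fun _ _ => 0)
    & forall i j, \sum_(k : K) P k i j = idop i j].

Definition bits (m : nat) := {ffun 'I_m -> bool}.
Definition hw m (a : bits m) : nat := #|[pred i | a i]|.
Definition dotb m (a b : bits m) : nat := \sum_(i < m) (a i && b i).
Definition xorb_bits m (a b : bits m) : bits m := [ffun i => xorb (a i) (b i)].

Definition hadamard (x y : bool) : C := (-1) ^+ (x && y) / sqrtC 2.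
(* H^theta = H^{theta_1} (x) ... (x) H^{theta_m} *)
Definition Htheta m (theta : bits m) : op (bits m) :=
  fun x y => \prod_(i < m) (if theta i then hadamard (x i) (y i)
                            else ((x i) == (y i))%:R).

(* |phi^+_{ab}> = 2^{-m/2} sum_v |v>_X (x) X^a Z^b |v>_Y,
   with X^a Z^b |v> = (-1)^{b.v} |v xor a>. *)
Definition epr m (a b : bits m) : (bits m * bits m)%type -> C :=
  fun xy => (sqrtC 2 ^+ m)^-1 * (-1) ^+ (dotb b xy.1)
            * (xy.2 == xorb_bits xy.1 a)%:R.

Definition PiEPR m (t : nat) : op (bits m * bits m)%type :=
  fun i j => \sum_(a : bits m | (hw a <= t)%N) \sum_(b : bits m | (hw b <= t)%N)
               ketbra (epr a b) i j.

End Quantum.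

(* Main.v *)
Require Import Defs.
From mathcomp Require Import all_boot all_order all_algebra.
From mathcomp Require Import ring.
Set Implicit Arguments. Unset Strict Implicit. Unset Printing Implicit Defensive.
Import Order.TTheory GRing.Theory Num.Theory.
Lemma count_hw (m t : nat) : #|[pred a : bits m | hw a <= t]| <= m.+1 ^ t.
Proof.
pose f := fun g : {ffun 'I_t -> 'I_m.+1} =>
  [ffun i : 'I_m => [exists k, g k == lift ord0 i]] : bits m.
have sub : [pred a : bits m | hw a <= t] \subset f @: [set: {ffun 'I_t -> 'I_m.+1}].
  apply/subsetP => a; rewrite inE /= => Ha.
  pose e := map (lift ord0) (enum [pred i | a i]).
  have He : size e <= t by rewrite size_map -cardE.
  apply/imsetP; exists [ffun k : 'I_t => nth ord0 e k]; first by rewrite inE.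
  apply/ffunP => i; rewrite /f ffunE.
  have Hi : (lift ord0 i \in e) = a i.
    by rewrite /e mem_map ?mem_enum //; exact: lift_inj.
  rewrite -Hi; apply/idP/idP.
    move=> Hin; have Hk : index (lift ord0 i) e < t.
      by apply: leq_trans He; rewrite index_mem.
    by apply/existsP; exists (Ordinal Hk); rewrite ffunE /= nth_index.
  move=> /existsP [k]; rewrite ffunE => /eqP Hk.
  case: (ltnP k (size e)) => Hke; first by rewrite -Hk mem_nth.
  by move: Hk; rewrite nth_default // => /eqP; rewrite (negbTE (neq_lift _ _)).
apply: leq_trans (subset_leq_card sub) _.
apply: leq_trans (leq_imset_card _ _) _.
by rewrite cardsT card_ffun !card_ord.
Qed.

Local Open Scope ring_scope.
Section Core.
Variable C : numClosedFieldType.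

Definition Bf (Z : finType) (rho : op C Z) (u w : Z -> C) :=
  \sum_i \sum_j (u i)^* * rho i j * w j.

Lemma Bexp2 (Z : finType) (rho : op C Z) (a b : C) (x y : Z -> C) :
  Bf rho (fun i => a * x i + b * y i) (fun i => a * x i + b * y i) =
  a^* * a * Bf rho x x + a^* * b * Bf rho x y + b^* * a * Bf rho y x
  + b^* * b * Bf rho y y.
Proof.
rewrite /Bf !mulr_sumr -!big_split; apply: eq_bigr => i _.
rewrite !mulr_sumr -!big_split; apply: eq_bigr => j _ /=.
rewrite rmorphD !rmorphM /=; ring.
Qed.

Lemma swap4 (I J K L : finType) (F : I -> J -> K -> L -> C) :
  \sum_i \sum_j \sum_k \sum_l F i j k l = \sum_k \sum_l \sum_i \sum_j F i j k l.
Proof.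
under eq_bigr => i _ do rewrite exchange_big.
rewrite exchange_big; apply: eq_bigr => k _.
under eq_bigr => i _ do rewrite exchange_big.
by rewrite exchange_big.
Qed.

Lemma Bsum (Z K : finType) (rho : op C Z) (c : K -> C) (x : K -> Z -> C) :
  Bf rho (fun i => \sum_a c a * x a i) (fun i => \sum_a c a * x a i) =
  \sum_a \sum_b (c a)^* * c b * Bf rho (x a) (x b).
Proof.
rewrite /Bf.
transitivity (\sum_i \sum_j \sum_a \sum_b ((c a)^* * c b * ((x a i)^* * rho i j * x b j))).
  apply: eq_bigr => i _; apply: eq_bigr => j _.
  rewrite rmorph_sum /= big_distrl /= big_distrl /=; apply: eq_bigr => a _.
  rewrite big_distrr /=; apply: eq_bigr => b _; rewrite rmorphM /=; ring.
rewrite swap4; apply: eq_bigr => a _; apply: eq_bigr => b _.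
rewrite mulr_sumr; apply: eq_bigr => i _; rewrite mulr_sumr; by apply: eq_bigr.
Qed.

Lemma Lag (Z K : finType) (rho : op C Z) (c : K -> C) (x : K -> Z -> C) :
  psd rho ->
  \sum_a \sum_b (c a)^* * c b * Bf rho (x a) (x b) <=
  (\sum_a c a * (c a)^*) * \sum_a Bf rho (x a) (x a).
Proof.
move=> [_ Hpsd].
set S := \sum_a \sum_b _. set N := \sum_a c a * _. set D := \sum_a Bf rho _ _.
have H0 : 0 <= \sum_a \sum_b Bf rho (fun i => (c a)^* * x b i + (- (c b)^*) * x a i)
                                    (fun i => (c a)^* * x b i + (- (c b)^*) * x a i).
  by apply: sumr_ge0 => a _; apply: sumr_ge0 => b _; apply: Hpsd.
have E : \sum_a \sum_b Bf rho (fun i => (c a)^* * x b i + (- (c b)^*) * x a i)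
                                    (fun i => (c a)^* * x b i + (- (c b)^*) * x a i)
         = (N * D - S) + (N * D - S).
  under eq_bigr => a _ do under eq_bigr => b _ do rewrite Bexp2.
  under eq_bigr => a _ do rewrite !big_split /=.
  rewrite !big_split /=.
  have E1 : \sum_a \sum_b (c a)^*^* * (c a)^* * Bf rho (x b) (x b) = N * D.
    rewrite /N /D big_distrlr; apply: eq_bigr => a _; apply: eq_bigr => b _.
    by rewrite conjCK.
  have E4 : \sum_a \sum_b (- (c b)^*)^* * - (c b)^* * Bf rho (x a) (x a) = N * D.
    rewrite mulrC /N /D big_distrlr /=; apply: eq_bigr => a _; apply: eq_bigr => b _.
    rewrite rmorphN /= conjCK; ring.
  have E3 : \sum_a \sum_b (- (c b)^*)^* * (c a)^* * Bf rho (x a) (x b) = - S.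
    rewrite /S -sumrN; apply: eq_bigr => a _; rewrite -sumrN; apply: eq_bigr => b _.
    rewrite rmorphN /= conjCK; ring.
  have E2 : \sum_a \sum_b (c a)^*^* * - (c b)^* * Bf rho (x b) (x a) = - S.
    rewrite exchange_big /S -sumrN; apply: eq_bigr => a _; rewrite -sumrN; apply: eq_bigr => b _.
    rewrite conjCK; ring.
  rewrite E1 E2 E3 E4; ring.
rewrite E -mulr2n -mulr_natl pmulr_rge0 ?ltr0n // subr_ge0 in H0.
exact: H0.
Qed.

Definition appl (Z : finType) (A : op C Z) (w : Z -> C) := fun i => \sum_k A i k * w k.

Lemma Bproj (Z : finType) (rho A : op C Z) (w w' : Z -> C) :
  Defs.hermitian rho -> Defs.hermitian A -> opmul A rho = rho ->
  Bf rho w w' = Bf rho (appl A w) (appl A w').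
Proof.
move=> Hr HA HAr.
have HL k z : rho k z = \sum_i A k i * rho i z by rewrite -{1}HAr.
have HR z k : rho z k = \sum_i rho z i * A i k.
  rewrite Hr HL rmorph_sum /=; apply: eq_bigr => i _.
  by rewrite rmorphM /= -Hr mulrC (HA k i) conjCK.
transitivity (Bf rho (appl A w) w').
  rewrite /Bf /appl.
  transitivity (\sum_k \sum_z \sum_i (w k)^* * A k i * rho i z * w' z).
    apply: eq_bigr => k _; apply: eq_bigr => z _; rewrite HL big_distrr big_distrl /=.
    by apply: eq_bigr => i _; ring.
  rewrite exchange_big /=; under eq_bigr => z _ do rewrite exchange_big /=.
  rewrite exchange_big /=; apply: eq_bigr => i _; apply: eq_bigr => z _.
  rewrite rmorph_sum /= !big_distrl /=; apply: eq_bigr => k _.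
  by rewrite rmorphM /= (HA i k) conjCK; ring.
rewrite /Bf /appl; apply: eq_bigr => i _.
transitivity (\sum_k \sum_j (\sum_k0 A i k0 * w k0)^* * rho i j * A j k * w' k).
  apply: eq_bigr => k _; rewrite HR big_distrr big_distrl /=.
  by apply: eq_bigr => j _; ring.
rewrite exchange_big /=; apply: eq_bigr => j _.
rewrite big_distrr /=; apply: eq_bigr => k _; ring.
Qed.

Lemma Pdecomp (R : finType) (P : op C R) :
  projector P -> forall r r', P r r' = \sum_s P r s * (P r' s)^*.
Proof.
move=> [HH HPP] r r'; rewrite -{1}HPP /opmul; apply: eq_bigr => s _.
by rewrite (HH s r').
Qed.

Lemma Bf_ext (Z : finType) (rho : op C Z) (f g : Z -> C) :
  f =1 g -> Bf rho f f = Bf rho g g.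
Proof.
move=> E; rewrite /Bf; apply: eq_bigr => i _; apply: eq_bigr => j _.
by rewrite !E.
Qed.

Lemma sum_pair (J R : finType) (F : (J * R)%type -> C) :
  \sum_k F k = \sum_j \sum_r F (j, r).
Proof. by rewrite pair_bigA; apply: eq_bigr => -[]. Qed.

Lemma sum_delta (T : finType) (r : T) (f : T -> C) :
  \sum_s ((r == s)%:R * f s) = f r.
Proof.
rewrite (bigD1 r) //= eqxx mul1r big1 ?addr0 // => s /negbTE.
by rewrite eq_sym => ->; rewrite mul0r.
Qed.

Lemma swap32 (I1 I2 I3 J1 J2 : finType) (F : I1 -> I2 -> I3 -> J1 -> J2 -> C) :
  \sum_a \sum_b \sum_c \sum_i \sum_j F a b c i j =
  \sum_i \sum_j \sum_a \sum_b \sum_c F a b c i j.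
Proof.
under eq_bigr => a _ do rewrite swap4.
rewrite exchange_big /=; apply: eq_bigr => i _.
by rewrite exchange_big.
Qed.

Theorem core (J R V Y K : finType) (rho : op C (J * R)%type) (Pi : op C J)
  (phi : K -> J -> C) (P : V -> op C R) (Q : V -> op C J)
  (u : V -> Y -> J -> C) (c : C) :
  density rho ->
  opmul (kron Pi (@idop C R)) rho = rho ->
  (forall j k, Pi j k = \sum_a phi a j * (phi a k)^*) ->
  (forall v, projector (P v)) ->
  (forall r r', \sum_v P v r r' = idop C r r') ->
  (forall v j j', Q v j j' = \sum_y u v y j * (u v y j')^*) ->
  (forall v, \sum_y \sum_a (\sum_j (phi a j)^* * u v y j) * (\sum_j (phi a j)^* * u v y j)^* <= c) ->
  \sum_v optr (opmul (kron (Q v) (P v)) rho) <= c.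
Proof.
move=> [Hpsd Htr] HA HPi HP Hcomp HQ Hc.
set A := kron Pi (@idop C R).
have HAh : Defs.hermitian A.
  move=> i j; rewrite /A /kron rmorphM /= HPi (HPi j.1 i.1) rmorph_sum /=.
  congr (_ * _).
    by apply: eq_bigr => a _; rewrite rmorphM /= conjCK mulrC.
  by rewrite /idop conjC_nat eq_sym.
set x := fun v a s (z : (J * R)%type) => phi a z.1 * P v z.2 s.
set D := fun v => \sum_s \sum_a Bf rho (x v a s) (x v a s).
have HD0 v : 0 <= D v.
  by apply: sumr_ge0 => s _; apply: sumr_ge0 => a _; exact: Hpsd.2.
have HDsum : \sum_v D v = 1.
  rewrite -Htr /D /Bf /x swap32 /optr.
  under [RHS]eq_bigr => j _ do rewrite -{1}HA /opmul.
  rewrite [RHS]exchange_big /=; apply: eq_bigr => i _; apply: eq_bigr => j _.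
  rewrite /A /kron HPi -Hcomp [in RHS]mulrC [in RHS]mulrA big_distrr /=.
  apply: eq_bigr => v _.
  rewrite (Pdecomp (HP v)) big_distrr /=; apply: eq_bigr => s _.
  rewrite big_distrr /= big_distrl /=; apply: eq_bigr => a _.
  rewrite rmorphM /=; ring.
have HT v : optr (opmul (kron (Q v) (P v)) rho) <= c * D v.
  set w := fun y s (z : (J * R)%type) => u v y z.1 * P v z.2 s.
  have E1 : optr (opmul (kron (Q v) (P v)) rho) = \sum_y \sum_s Bf rho (w y s) (w y s).
    rewrite /Bf /w swap4 /optr /opmul exchange_big /=.
    apply: eq_bigr => i _; apply: eq_bigr => j _.
    rewrite /kron HQ (Pdecomp (HP v) j.2) big_distrlr big_distrl /=.
    apply: eq_bigr => y _; rewrite big_distrl /=; apply: eq_bigr => s _.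
    rewrite rmorphM /=; ring.
  set N := fun y => \sum_a (\sum_j (phi a j)^* * u v y j) * (\sum_j (phi a j)^* * u v y j)^*.
  have E2 y s : Bf rho (w y s) (w y s) <= N y * \sum_a Bf rho (x v a s) (x v a s).
    rewrite (Bproj _ _ Hpsd.1 HAh HA).
    rewrite (@Bf_ext _ _ _ (fun z => \sum_a (\sum_j (phi a j)^* * u v y j) * x v a s z)).
      by rewrite Bsum; apply: Lag.
    move=> z; rewrite /appl sum_pair /w /x /A /kron.
    under eq_bigr => j _ do under eq_bigr => r _ do rewrite /idop /= [X in X * _]mulrC -mulrA.
    under eq_bigr => j _ do rewrite sum_delta.
    under eq_bigr => j _ do rewrite HPi !big_distrl /=.
    rewrite exchange_big /=; apply: eq_bigr => a _.
    rewrite !big_distrl /=; apply: eq_bigr => j _; ring.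
  rewrite E1; apply: (@le_trans _ _ (\sum_y \sum_s N y * \sum_a Bf rho (x v a s) (x v a s))).
    by apply: ler_sum => y _; apply: ler_sum => s _; apply: E2.
  rewrite -big_distrlr; apply: ler_wpM2r; first exact: HD0.
  exact: Hc.
rewrite -[c]mulr1 -HDsum mulr_sumr; apply: ler_sum => v _; exact: HT.
Qed.

End Core.
Section Conc.
Variable C : numClosedFieldType.

Lemma s2_conj : (sqrtC 2 : C)^* = sqrtC 2.
Proof. by apply: conj_Creal; apply: ger0_real; rewrite sqrtC_ge0 ler0n. Qed.

Lemma s2_sq : (sqrtC 2 : C) * sqrtC 2 = 2.
Proof. by rewrite -expr2 sqrtCK. Qed.

Lemma s2_neq0 : (sqrtC 2 : C) != 0.
Proof. by rewrite sqrtC_eq0 pnatr_eq0. Qed.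

Lemma sign_conj k : ((-1) ^+ k : C)^* = (-1) ^+ k.
Proof. by rewrite rmorphXn rmorphN1. Qed.

Lemma sign_sq k : ((-1) ^+ k : C) * (-1) ^+ k = 1.
Proof. have H := signrMK k (1 : C). simpl in H. rewrite mulr1 in H. exact: H. Qed.

Lemma had_conj a b : (hadamard C a b)^* = hadamard C b a.
Proof. by rewrite /hadamard rmorphM /= fmorphV /= sign_conj s2_conj andbC. Qed.

Lemma Hsym m (theta : bits m) x y : (Htheta C theta x y)^* = Htheta C theta y x.
Proof.
rewrite /Htheta rmorph_prod /=; apply: eq_bigr => i _.
by case: (theta i); rewrite ?had_conj // conjC_nat eq_sym.
Qed.

Lemma had_norm a b : hadamard C a b * (hadamard C a b)^* = 2^-1.
Proof.
rewrite /hadamard rmorphM /= fmorphV /= sign_conj s2_conj.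
have := sign_sq (a && b); have := s2_sq; have := s2_neq0.
move: ((-1) ^+ (a && b) : C) (sqrtC 2 : C) => e s Hs Hss Hee.
by rewrite -Hss mulrACA Hee mul1r invfM.
Qed.

Lemma Hnorm m (theta : bits m) v : \sum_x Htheta C theta x v * (Htheta C theta x v)^* = 1.
Proof.
rewrite /Htheta.
under eq_bigr => x _ do rewrite rmorph_prod /= -big_split /=.
rewrite -(bigA_distr_bigA (fun i b => (if theta i then hadamard C b (v i) else (b == v i)%:R) *
   (if theta i then hadamard C b (v i) else (b == v i)%:R)^*)) /=.
apply: big1 => i _; rewrite big_bool /=.
case: (theta i); first by rewrite !had_norm; field.
by case: (v i); rewrite /= conjC1 conjC0; ring.
Qed.

End Conc.


Section Main.
Variable C : numClosedFieldType.

Lemma sum_deltar (T : finType) (v : T) (f : T -> C) :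
  \sum_k f k * (k == v)%:R = f v.
Proof.
rewrite (bigD1 v) //= eqxx mulr1 big1 ?addr0 // => k /negbTE ->; by rewrite mulr0.
Qed.

Lemma xorK m (x a : bits m) : xorb_bits (xorb_bits x a) a = x.
Proof. by apply/ffunP => i; rewrite !ffunE; case: (x i); case: (a i). Qed.

Lemma xor_eq m (y0 x a : bits m) : (y0 == xorb_bits x a) = (x == xorb_bits y0 a).
Proof. by apply/eqP/eqP => ->; rewrite xorK. Qed.

Lemma xor_inj m (a : bits m) : injective (fun y => xorb_bits y a).
Proof.
by apply: (can_inj (g := fun y => xorb_bits y a)) => y; rewrite xorK.
Qed.

End Main.

Theorem mainTheorem12 (C : numClosedFieldType) (m t : nat) (theta : bits m)
  (TR : finType) (rho : op C ((bits m * bits m) * TR)%type)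
  (P : bits m -> op C TR) :
  density rho ->
  opmul (kron (@PiEPR C m t) (@idop C TR)) rho = rho ->
  complete_orth_projectors P ->
  \sum_(v : bits m)
     optr (opmul (kron (kron (opmul (opmul (Htheta C theta) (basisproj C v))
                                        (Htheta C theta))
                             (@idop C (bits m)))
                       (P v)) rho)
  <= (2 ^+ m)^-1 * (m.+1)%:R ^+ (2 * t).
Proof.
move=> Hrho HA [HPproj _ Hsum].
pose S := fun al : (bits m * bits m)%type => ((hw al.1 <= t) && (hw al.2 <= t))%N.
pose phi := fun al : (bits m * bits m)%type =>
  if S al then epr C al.1 al.2 else (fun _ => 0).
pose u := fun v (y0 : bits m) (z : (bits m * bits m)%type) =>
  Htheta C theta z.1 v * (z.2 == y0)%:R.
apply: (core (Pi := @PiEPR C m t) (phi := phi) (u := u) Hrho HA _ HPproj Hsum _ _).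
- move=> j k; rewrite /PiEPR sum_pair big_mkcond /=; apply: eq_bigr => a _.
  case Ha: (hw a <= t)%N.
    rewrite big_mkcond /=; apply: eq_bigr => b _.
    rewrite /phi /S /= Ha; case: (hw b <= t)%N => /=; first by []. by rewrite conjC0 mulr0.
  by rewrite big1 // => b _; rewrite /phi /S /= Ha /= mul0r.
- move=> v [x y] [x' y']; rewrite /kron /opmul /=.
  have E : \sum_k (\sum_l Htheta C theta x l * basisproj C v l k) * Htheta C theta k x'
           = Htheta C theta x v * Htheta C theta v x'.
    under eq_bigr => k _ do under eq_bigr => l _ do rewrite /basisproj -mulnb natrM mulrA.
    under eq_bigr => k _ do rewrite -big_distrl /= sum_deltar mulrAC.
    by rewrite sum_deltar.
  rewrite E /u /=.
  transitivity (\sum_y0 (Htheta C theta x v * Htheta C theta v x' * (y' == y0)%:R) * (y0 == y)%:R).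
    by rewrite sum_deltar /idop eq_sym.
  apply: eq_bigr => y0 _; rewrite rmorphM /= Hsym conjC_nat (eq_sym y0); ring.
- move=> v.
  set s := ((sqrtC 2 ^+ m)^-1 : C).
  have Hs : s^* * s = (2 ^+ m)^-1.
    rewrite /s fmorphV /= rmorphXn /= s2_conj -invfM -exprMn s2_sq //.
  have Hcoef (y : bits m) al :
    (\sum_j (phi al j)^* * u v y j) * (\sum_j (phi al j)^* * u v y j)^* =
    if S al then (2 ^+ m)^-1 * (Htheta C theta (xorb_bits y al.1) v *
                               (Htheta C theta (xorb_bits y al.1) v)^*) else 0.
    rewrite /phi; case: (S al); last by rewrite big1 ?mul0r // => j _; rewrite conjC0 mul0r.
    have Hc : \sum_j (epr C al.1 al.2 j)^* * u v y j =
        (s * (-1) ^+ (dotb al.2 (xorb_bits y al.1)))^* * Htheta C theta (xorb_bits y al.1) v.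
      rewrite sum_pair.
      transitivity (\sum_x \sum_y1 ((s * (-1) ^+ dotb al.2 x)^* * Htheta C theta x v *
         (y1 == xorb_bits x al.1)%:R) * (y1 == y)%:R).
        apply: eq_bigr => x _; apply: eq_bigr => y1 _.
        rewrite /epr /u /= !rmorphM /= conjC_nat; ring.
      under eq_bigr => x _ do rewrite sum_deltar xor_eq.
      by rewrite sum_deltar.
    rewrite Hc !rmorphM /= !conjCK.
    have He := sign_conj C (dotb al.2 (xorb_bits y al.1)).
    have He2 := sign_sq C (dotb al.2 (xorb_bits y al.1)).
    move: He He2 Hs; move: ((-1) ^+ _ : C) => e He He2 Hs'.
    rewrite He -Hs'.
    transitivity (s^* * s * (e * e) * (Htheta C theta (xorb_bits y al.1) v *
       (Htheta C theta (xorb_bits y al.1) v)^*)); first ring.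
    by rewrite He2 mulr1.
  under eq_bigr => y _ do under eq_bigr => al _ do rewrite Hcoef.
  rewrite exchange_big /=.
  rewrite (eq_bigr (fun al => if S al then (2 ^+ m)^-1 else 0)); last first.
    move=> al _; case: (S al); last by rewrite big1.
    rewrite -mulr_sumr.
    have := Hnorm C theta v; rewrite (reindex_inj (@xor_inj m al.1)) /= => ->.
    by rewrite mulr1.
  rewrite -big_mkcond sumr_const -(mulr_natr ((2 ^+ m)^-1)).
  apply: ler_wpM2l; first by rewrite invr_ge0 exprn_ge0 // ler0n.
  rewrite -natrX ler_nat.
  have -> : #|[pred al | S al]| = #|[predX [pred a : bits m | (hw a <= t)%N] & [pred a : bits m | (hw a <= t)%N]]|.
    by apply: eq_card => -[a b].
  rewrite cardX mul2n -addnn expnD.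
  by apply: leq_mul; apply: count_hw.
Qed.
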